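(* For each positive integer $n$, the complex $CFK^\infty(\pm nT_{2,3})$ is filtered chain homotopy equivalent to $CFK^\infty(\pm T_{2,2n+1})\oplus A_{\pm n}$, where $A_{\pm n}$ is an acyclic complex over $\mathbb{F}[U]$.
   Context: $nT_{2,3}$ denotes the connected sum of $n$ copies of the trefoil $T_{2,3}$ and $-nT_{2,3}$ its mirror; $CFK^\infty$ is the full knot Floer complex over $\mathbb{F}[U,U^{-1}]$ with its $\mathbb{Z}\oplus\mathbb{Z}$ filtration. *)

(* Defs.v *)
From HB Require Import structures.
From mathcomp Require Import all_boot all_order all_algebra.
Set Implicit Arguments. Unset Strict Implicit. Unset Printing Implicit Defensive.
Import Order.TTheory GRing.Theory Num.Theory.
Local Open Scope ring_scope.

(* A finitely generated free complex over F_2[U,U^{-1}] with a homogeneous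
   filtered basis [gen]: the basis element x sits in Maslov grading [gr x]
   and at filtration level (i,j) = (0, alex x); U^m x has grading gr x - 2m
   and filtration level (-m, alex x - m).
   [dif y x] is the F_2-coefficient of (U^m y) in (d x); the exponent m is
   forced by the gradings: m = (gr y - gr x + 1)/2.  *)
Record fcomplex := FComplex {
  gen  : finType;
  gr   : gen -> int;
  alex : gen -> int;
  dif  : gen -> gen -> 'F_2 }.
Arguments dif : clear implicits.

(* f : {F[U,U^-1]-linear maps C -> D, homogeneous of degree delta}, given
   by coefficients f y x (y : gen D, x : gen C) of U^m y in f x, with
   m = (gr y - gr x - delta)/2.  [filtered_hom] : the coefficients are only
   nonzero when this m is an integer and U^m y lies in filtration level
   <= (0, alex x) componentwise. *)
Definition filtered_hom (C D : fcomplex) (delta : int)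
  (f : gen D -> gen C -> 'F_2) : Prop :=
  forall (y : gen D) (x : gen C), f y x != 0 ->
    let e := gr y - gr x - delta in
    [/\ (2 %| e)%Z, 0 <= (e %/ 2)%Z & alex y - (e %/ 2)%Z <= alex x].

Arguments filtered_hom : clear implicits.


(* composition of maps (the U-exponents add automatically) *)
Definition comp (A B C : fcomplex) (f : gen C -> gen B -> 'F_2)
  (g : gen B -> gen A -> 'F_2) : gen C -> gen A -> 'F_2 :=
  fun z x => \sum_(y : gen B) f z y * g y x.

Definition idm (C : fcomplex) : gen C -> gen C -> 'F_2 :=
  fun y x => (y == x)%:R.
Arguments idm : clear implicits.

Definition is_cfk (C : fcomplex) : Prop :=
  filtered_hom C C (-1) (dif C) /\
  forall z x, comp (dif C) (dif C) z x = 0.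

Definition chain_map (C D : fcomplex) (f : gen D -> gen C -> 'F_2) : Prop :=
  forall z x, comp f (dif C) z x = comp (dif D) f z x.
Arguments chain_map : clear implicits.

(* filtered (graded) chain homotopy equivalence; char 2 so signs vanish *)
Definition filt_htpy_equiv (C D : fcomplex) : Prop :=
  exists (f : gen D -> gen C -> 'F_2) (g : gen C -> gen D -> 'F_2)
         (hC : gen C -> gen C -> 'F_2) (hD : gen D -> gen D -> 'F_2),
  [/\ filtered_hom C D 0 f, filtered_hom D C 0 g,
      chain_map C D f & chain_map D C g] /\
  [/\ filtered_hom C C 1 hC, filtered_hom D D 1 hD,
      (forall z x, comp g f z x + idm C z x =
                   comp (dif C) hC z x + comp hC (dif C) z x) &
      (forall z x, comp f g z x + idm D z x =
                   comp (dif D) hD z x + comp hD (dif D) z x)].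

(* For a graded free complex over the graded
   field F[U,U^{-1}] (|U| = -2) this is equivalent to the vanishing of the
   homology of its gradings-{0,1} slice, an F_2-complex with basis one
   U-translate of each generator and matrix exactly [dif]. *)
Definition acyclic (C : fcomplex) : Prop :=
  forall v : gen C -> 'F_2,
    (forall z, \sum_(x : gen C) dif C z x * v x = 0) ->
    exists w : gen C -> 'F_2,
      forall z, v z = \sum_(x : gen C) dif C z x * w x.

Definition dsum (C D : fcomplex) : fcomplex :=
  @FComplex (gen C + gen D)%type
    (fun x => match x with inl a => gr a | inr b => gr b end)
    (fun x => match x with inl a => alex a | inr b => alex b end)
    (fun y x => match y, x with
                | inl a, inl b => dif C a b
                | inr a, inr b => dif D a b
                | _, _ => 0 end).

(* tensor product over F[U,U^{-1}] (Kunneth: CFK^oo(K1#K2) = tensor) *)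
Definition tens (C D : fcomplex) : fcomplex :=
  @FComplex (gen C * gen D)%type
    (fun x => gr x.1 + gr x.2)
    (fun x => alex x.1 + alex x.2)
    (fun y x => dif C y.1 x.1 * (y.2 == x.2)%:R +
                (y.1 == x.1)%:R * dif D y.2 x.2).

(* dual complex (CFK^oo of the mirror image) *)
Definition dual (C : fcomplex) : fcomplex :=
  @FComplex (gen C) (fun x => - gr x) (fun x => - alex x)
    (fun y x => dif C x y).

(* unknot complex: one generator in grading 0, Alexander 0 *)
Definition unit_cx : fcomplex :=
  @FComplex unit (fun _ => 0) (fun _ => 0) (fun _ _ => 0).

Fixpoint tpow (C : fcomplex) (n : nat) : fcomplex :=
  match n with 0 => unit_cx | k.+1 => tens (tpow C k) C end.

(* CFK^oo(T_{2,2n+1}): the staircase with generators x_0,...,x_{2n},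
   gr x_s = -s, A(x_s) = n - s, and  d x_s = U x_{s-1} + x_{s+1} for s odd,
   d x_s = 0 for s even. *)
Definition torus2 (n : nat) : fcomplex :=
  @FComplex 'I_(n.*2.+1)
    (fun s => - (nat_of_ord s)%:Z)
    (fun s => n%:Z - (nat_of_ord s)%:Z)
    (fun y x => if odd x && ((y.+1 == x :> nat) || (y == x.+1 :> nat))
                then 1 else 0).

Definition trefoil : fcomplex := torus2 1.
Definition CFK_nT23 (n : nat) : fcomplex := tpow trefoil n.
Definition CFK_mnT23 (n : nat) : fcomplex := tpow (dual trefoil) n.
Definition CFK_T2 (n : nat) : fcomplex := torus2 n.
Definition CFK_mT2 (n : nat) : fcomplex := dual (torus2 n).

(* Main.v *)
Require Import Defs.
From mathcomp Require Import all_boot all_order all_algebra.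
From HB Require Import structures.
From mathcomp Require Import zify.
From Stdlib Require Import FunctionalExtensionality.
Set Implicit Arguments. Unset Strict Implicit. Unset Printing Implicit Defensive.
Import Order.TTheory GRing.Theory Num.Theory.
Local Open Scope ring_scope.


Notation F := 'F_2.

Lemma F2_nat (n : nat) : (n%:R : F) = (odd n)%:R.
Proof.
elim: n => // n IH; rewrite -[n.+1]addn1 natrD IH /= oddD addbT.
by case: (odd n); apply/val_inj.
Qed.

Lemma F2_addxx (x : F) : x + x = 0.
Proof. by case: x => [[|[|//]]] ?; apply/val_inj. Qed.

Lemma F2_cases (x : F) : x = 0 \/ x = 1.
Proof. by case: x => [[|[|//]]] ?; [left|right]; apply/val_inj. Qed.

Section Mat.
Definition mcomp (T1 T2 T3 : finType) (f : T3 -> T2 -> F) (g : T2 -> T1 -> F)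
  : T3 -> T1 -> F := fun z x => \sum_y f z y * g y x.
Definition addm (T1 T2 : finType) (f g : T2 -> T1 -> F) : T2 -> T1 -> F :=
  fun y x => f y x + g y x.
Definition zm (T1 T2 : finType) : T2 -> T1 -> F := fun _ _ => 0.
Definition id1 (T : finType) : T -> T -> F := fun y x => (y == x)%:R.
Arguments zm {T1 T2}.
Arguments id1 {T}.
Definition kron (A1 A2 B1 B2 : finType) (f : A2 -> A1 -> F) (g : B2 -> B1 -> F)
  : A2 * B2 -> A1 * B1 -> F := fun y x => f y.1 x.1 * g y.2 x.2.
Definition tr (T1 T2 : finType) (f : T2 -> T1 -> F) : T1 -> T2 -> F :=
  fun y x => f x y.
Definition dmat (A1 A2 B1 B2 : finType) (f : A2 -> A1 -> F) (g : B2 -> B1 -> F)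
  : A2 + B2 -> A1 + B1 -> F := fun y x =>
  match y, x with inl a, inl b => f a b | inr a, inr b => g a b | _, _ => 0 end.

Lemma compE (A B C : fcomplex) (f : gen C -> gen B -> F) (g : gen B -> gen A -> F) :
  Defs.comp f g = mcomp f g.
Proof. by []. Qed.

Lemma mcompA (T1 T2 T3 T4 : finType) (f : T4 -> T3 -> F) (g : T3 -> T2 -> F)
  (h : T2 -> T1 -> F) : mcomp f (mcomp g h) = mcomp (mcomp f g) h.
Proof.
apply: functional_extensionality => z; apply: functional_extensionality => x.
rewrite /mcomp.
under eq_bigr => y _ do rewrite big_distrr /=.
rewrite exchange_big /=; apply: eq_bigr => w _.
by rewrite big_distrl /=; apply: eq_bigr => y _; rewrite mulrA.
Qed.

Lemma mcompDr (T1 T2 T3 : finType) (f : T3 -> T2 -> F) (g h : T2 -> T1 -> F) :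
  mcomp f (addm g h) = addm (mcomp f g) (mcomp f h).
Proof.
apply: functional_extensionality => z; apply: functional_extensionality => x.
by rewrite /mcomp /addm -big_split; apply: eq_bigr => y _; rewrite mulrDr.
Qed.

Lemma mcompDl (T1 T2 T3 : finType) (f g : T3 -> T2 -> F) (h : T2 -> T1 -> F) :
  mcomp (addm f g) h = addm (mcomp f h) (mcomp g h).
Proof.
apply: functional_extensionality => z; apply: functional_extensionality => x.
by rewrite /mcomp /addm -big_split; apply: eq_bigr => y _; rewrite mulrDl.
Qed.

Lemma mcomp1l (T1 T2 : finType) (f : T2 -> T1 -> F) : mcomp (@id1 T2) f = f.
Proof.
apply: functional_extensionality => z; apply: functional_extensionality => x.
rewrite /mcomp (bigD1 z) //= big1 ?addr0 /id1 ?eqxx ?mul1r // => y /negbTE.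
by rewrite eq_sym => ->; rewrite mul0r.
Qed.

Lemma mcomp1r (T1 T2 : finType) (f : T2 -> T1 -> F) : mcomp f (@id1 T1) = f.
Proof.
apply: functional_extensionality => z; apply: functional_extensionality => x.
rewrite /mcomp (bigD1 x) //= big1 ?addr0 /id1 ?eqxx ?mulr1 // => y /negbTE.
by move ->; rewrite mulr0.
Qed.

Lemma mcomp0l (T1 T2 T3 : finType) (f : T2 -> T1 -> F) :
  mcomp (@zm T2 T3) f = zm.
Proof.
apply: functional_extensionality => z; apply: functional_extensionality => x.
by rewrite /mcomp big1 // => y _; rewrite mul0r.
Qed.

Lemma mcomp0r (T1 T2 T3 : finType) (f : T3 -> T2 -> F) :
  mcomp f (@zm T1 T2) = zm.
Proof.
apply: functional_extensionality => z; apply: functional_extensionality => x.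
by rewrite /mcomp big1 // => y _; rewrite mulr0.
Qed.

Lemma addmC (T1 T2 : finType) (f g : T2 -> T1 -> F) : addm f g = addm g f.
Proof.
apply: functional_extensionality => z; apply: functional_extensionality => x.
by rewrite /addm addrC.
Qed.

Lemma addmA (T1 T2 : finType) (f g h : T2 -> T1 -> F) :
  addm f (addm g h) = addm (addm f g) h.
Proof.
apply: functional_extensionality => z; apply: functional_extensionality => x.
by rewrite /addm addrA.
Qed.

Lemma addmm (T1 T2 : finType) (f : T2 -> T1 -> F) : addm f f = zm.
Proof.
apply: functional_extensionality => z; apply: functional_extensionality => x.
by rewrite /addm F2_addxx.
Qed.

Lemma add0m (T1 T2 : finType) (f : T2 -> T1 -> F) : addm zm f = f.
Proof.
apply: functional_extensionality => z; apply: functional_extensionality => x.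
by rewrite /addm add0r.
Qed.

Lemma addm0 (T1 T2 : finType) (f : T2 -> T1 -> F) : addm f zm = f.
Proof. by rewrite addmC add0m. Qed.

Lemma kron_comp (A1 A2 A3 B1 B2 B3 : finType) (f : A3 -> A2 -> F)
  (f' : A2 -> A1 -> F) (g : B3 -> B2 -> F) (g' : B2 -> B1 -> F) :
  mcomp (kron f g) (kron f' g') = kron (mcomp f f') (mcomp g g').
Proof.
apply: functional_extensionality => z; apply: functional_extensionality => x.
rewrite /mcomp /kron /= -(pair_bigA _ (fun a b => f z.1 a * g z.2 b * (f' a x.1 * g' b x.2))) /=.
rewrite big_distrl /=; apply: eq_bigr => a _.
rewrite big_distrr /=; apply: eq_bigr => b _.
by rewrite mulrACA.
Qed.

Lemma kron_addl (A1 A2 B1 B2 : finType) (f f' : A2 -> A1 -> F) (g : B2 -> B1 -> F) :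
  kron (addm f f') g = addm (kron f g) (kron f' g).
Proof.
apply: functional_extensionality => z; apply: functional_extensionality => x.
by rewrite /kron /addm mulrDl.
Qed.

Lemma kron_addr (A1 A2 B1 B2 : finType) (f : A2 -> A1 -> F) (g g' : B2 -> B1 -> F) :
  kron f (addm g g') = addm (kron f g) (kron f g').
Proof.
apply: functional_extensionality => z; apply: functional_extensionality => x.
by rewrite /kron /addm mulrDr.
Qed.

Lemma kron11 (A B : finType) : kron (@id1 A) (@id1 B) = @id1 (A * B)%type.
Proof.
apply: functional_extensionality => z; apply: functional_extensionality => x.
case: z x => [a b] [c d]; rewrite /kron /id1 /= xpair_eqE.
by case: (a == c); case: (b == d); rewrite ?mulr1 ?mulr0 ?mul0r.
Qed.

Lemma kron0l (A1 A2 B1 B2 : finType) (g : B2 -> B1 -> F) :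
  kron (@zm A1 A2) g = zm.
Proof.
apply: functional_extensionality => z; apply: functional_extensionality => x.
by rewrite /kron /zm mul0r.
Qed.

Lemma kron0r (A1 A2 B1 B2 : finType) (f : A2 -> A1 -> F) :
  kron f (@zm B1 B2) = zm.
Proof.
apply: functional_extensionality => z; apply: functional_extensionality => x.
by rewrite /kron /zm mulr0.
Qed.

Lemma tr_comp (T1 T2 T3 : finType) (f : T3 -> T2 -> F) (g : T2 -> T1 -> F) :
  tr (mcomp f g) = mcomp (tr g) (tr f).
Proof.
apply: functional_extensionality => z; apply: functional_extensionality => x.
by rewrite /tr /mcomp; apply: eq_bigr => y _; rewrite mulrC.
Qed.

Lemma tr_add (T1 T2 : finType) (f g : T2 -> T1 -> F) :
  tr (addm f g) = addm (tr f) (tr g).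
Proof. by []. Qed.

Lemma tr_id1 (T : finType) : tr (@id1 T) = @id1 T.
Proof.
apply: functional_extensionality => z; apply: functional_extensionality => x.
by rewrite /tr /id1 eq_sym.
Qed.

Lemma tr_zm (T1 T2 : finType) : tr (@zm T1 T2) = zm.
Proof. by []. Qed.

Lemma dmat_comp (A1 A2 A3 B1 B2 B3 : finType) (f : A3 -> A2 -> F)
  (f' : A2 -> A1 -> F) (g : B3 -> B2 -> F) (g' : B2 -> B1 -> F) :
  mcomp (dmat f g) (dmat f' g') = dmat (mcomp f f') (mcomp g g').
Proof.
apply: functional_extensionality => z; apply: functional_extensionality => x.
rewrite /mcomp big_sumType /=.
case: z => a; case: x => b /=.
- by rewrite [X in _ + X]big1 ?addr0 // => y _; rewrite mul0r.
- by rewrite !big1 ?addr0 // => y _; rewrite ?mul0r ?mulr0.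
- by rewrite !big1 ?addr0 // => y _; rewrite ?mul0r ?mulr0.
- by rewrite [X in X + _]big1 ?add0r // => y _; rewrite mul0r.
Qed.

Lemma dmat_add (A1 A2 B1 B2 : finType) (f f' : A2 -> A1 -> F) (g g' : B2 -> B1 -> F) :
  addm (dmat f g) (dmat f' g') = dmat (addm f f') (addm g g').
Proof.
apply: functional_extensionality => z; apply: functional_extensionality => x.
by case: z => a; case: x => b; rewrite /addm /= ?addr0.
Qed.

Lemma dmat11 (A B : finType) : dmat (@id1 A) (@id1 B) = @id1 (A + B)%type.
Proof.
apply: functional_extensionality => z; apply: functional_extensionality => x.
by case: z => a; case: x => b.
Qed.

Lemma dmat00 (A1 A2 B1 B2 : finType) : dmat (@zm A1 A2) (@zm B1 B2) = zm.
Proof.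
apply: functional_extensionality => z; apply: functional_extensionality => x.
by case: z => a; case: x => b.
Qed.
End Mat.

Arguments zm {T1 T2}.
Arguments id1 {T}.

Definition filt (C D : fcomplex) (d : int) (f : gen D -> gen C -> F) : Prop :=
  forall y x, f y x != 0 -> exists m : int,
    [/\ gr y - gr x - d = m * 2, 0 <= m & alex y - m <= alex x].
Arguments filt : clear implicits.

Lemma filtP C D d f : filtered_hom C D d f <-> filt C D d f.
Proof.
split=> H y x /H.
- case=> dv m0 al; exists ((gr y - gr x - d) %/ 2)%Z; split => //.
  by rewrite divzK.
- case=> m [e m0 al] /=; rewrite e mulzK //; split => //.
  by rewrite dvdz_mull.
Qed.

Lemma sum_neq0 (T : finType) (G : T -> F) : \sum_y G y != 0 -> exists y, G y != 0.
Proof.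
move=> H; apply/existsP; apply: contraNT H; rewrite negb_exists => /forallP H.
by apply/eqP; apply: big1 => y _; move: (H y); rewrite negbK => /eqP.
Qed.

Lemma filt_comp (A B C : fcomplex) d1 d2 (f : gen C -> gen B -> F)
  (g : gen B -> gen A -> F) :
  filt B C d1 f -> filt A B d2 g -> filt A C (d1 + d2) (mcomp f g).
Proof.
move=> Hf Hg z x /sum_neq0 [y]; rewrite mulf_eq0 negb_or => /andP [/Hf [m1 [e1 p1 a1]] /Hg [m2 [e2 p2 a2]]].
exists (m1 + m2); split; lia.
Qed.

Lemma filt_add C D d (f g : gen D -> gen C -> F) :
  filt C D d f -> filt C D d g -> filt C D d (addm f g).
Proof.
move=> Hf Hg y x; rewrite /addm => H.
have [/Hf //|/Hg //] : f y x != 0 \/ g y x != 0.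
by case: (f y x =P 0) => [E|/eqP]; [right; move: H; rewrite E add0r|left].
Qed.

Lemma filt_zm C D d : filt C D d zm.
Proof. by move=> y x; rewrite eqxx. Qed.

Lemma filt_id1 C : filt C C 0 id1.
Proof.
move=> y x; rewrite /id1; case: (y =P x) => [->|_]; last by rewrite eqxx.
by move=> _; exists 0; split; lia.
Qed.

Lemma filt_kronl C C' D d (f : gen C' -> gen C -> F) :
  filt C C' d f -> filt (tens C D) (tens C' D) d (kron f id1).
Proof.
move=> H [y1 y2] [x1 x2]; rewrite /kron /id1 /=.
case: (y2 =P x2) => [->|]; last by rewrite mulr0 eqxx.
rewrite mulr1 => /H [m [e p a]]; exists m; split; lia.
Qed.

Lemma filt_kronr C D D' d (g : gen D' -> gen D -> F) :
  filt D D' d g -> filt (tens C D) (tens C D') d (kron id1 g).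
Proof.
move=> H [y1 y2] [x1 x2]; rewrite /kron /id1 /=.
case: (y1 =P x1) => [->|]; last by rewrite mul0r eqxx.
rewrite mul1r => /H [m [e p a]]; exists m; split; lia.
Qed.

Lemma filt_dmat C C' D D' d (f : gen C' -> gen C -> F) (g : gen D' -> gen D -> F) :
  filt C C' d f -> filt D D' d g -> filt (dsum C D) (dsum C' D') d (dmat f g).
Proof.
move=> Hf Hg [y|y] [x|x] //=; rewrite ?eqxx //.
- by move=> /Hf.
- by move=> /Hg.
Qed.

Lemma filt_tr C D d (f : gen D -> gen C -> F) :
  filt C D d f -> filt (dual D) (dual C) d (tr f).
Proof.
move=> H y x; rewrite /tr => /H [m [e p a]]; exists m; split => /=; lia.
Qed.

Definition hequiv (C D : fcomplex) : Prop :=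
  exists (f : gen D -> gen C -> F) (g : gen C -> gen D -> F)
         (hC : gen C -> gen C -> F) (hD : gen D -> gen D -> F),
  [/\ filt C D 0 f, filt D C 0 g,
      mcomp f (dif C) = mcomp (dif D) f & mcomp g (dif D) = mcomp (dif C) g] /\
  [/\ filt C C 1 hC, filt D D 1 hD,
      addm (mcomp g f) id1 = addm (mcomp (dif C) hC) (mcomp hC (dif C)) &
      addm (mcomp f g) id1 = addm (mcomp (dif D) hD) (mcomp hD (dif D))].

Lemma hequivP C D : hequiv C D -> filt_htpy_equiv C D.
Proof.
case=> f [g [hC [hD [[f1 f2 f3 f4] [f5 f6 f7 f8]]]]].
exists f, g, hC, hD; split; split; rewrite ?filtP //.
- by move=> z x; rewrite !compE f3.
- by move=> z x; rewrite !compE f4.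
- by move=> z x; rewrite !compE; move: f7 => /(congr1 (fun F => F z x)).
- by move=> z x; rewrite !compE; move: f8 => /(congr1 (fun F => F z x)).
Qed.

Lemma addm_id_sol (T : finType) (X Y : T -> T -> F) : addm X id1 = Y -> X = addm Y id1.
Proof. by move<-; rewrite -addmA addmm addm0. Qed.

Lemma hequiv_sym C D : hequiv C D -> hequiv D C.
Proof.
case=> f [g [hC [hD [[f1 f2 f3 f4] [f5 f6 f7 f8]]]]].
by exists g, f, hD, hC.
Qed.

Lemma htpy_alg (T1 T2 T3 : finType) (dC : T1 -> T1 -> F) (dD : T2 -> T2 -> F)
  (f1 : T2 -> T1 -> F) (g1 : T1 -> T2 -> F) (f2 : T3 -> T2 -> F) (g2 : T2 -> T3 -> F)
  (h1 : T1 -> T1 -> F) (h2 : T2 -> T2 -> F) :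
  mcomp g1 dD = mcomp dC g1 -> mcomp f1 dC = mcomp dD f1 ->
  addm (mcomp g1 f1) id1 = addm (mcomp dC h1) (mcomp h1 dC) ->
  addm (mcomp g2 f2) id1 = addm (mcomp dD h2) (mcomp h2 dD) ->
  addm (mcomp (mcomp g1 g2) (mcomp f2 f1)) id1 =
  addm (mcomp dC (addm h1 (mcomp g1 (mcomp h2 f1))))
       (mcomp (addm h1 (mcomp g1 (mcomp h2 f1))) dC).
Proof.
move=> c1 c2 H1 H2.
have E1 : mcomp dC (mcomp g1 (mcomp h2 f1)) = mcomp g1 (mcomp (mcomp dD h2) f1).
  by rewrite mcompA -c1 -!mcompA.
have E2 : mcomp (mcomp g1 (mcomp h2 f1)) dC = mcomp g1 (mcomp (mcomp h2 dD) f1).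
  by rewrite -!mcompA c2.
rewrite !mcompDr !mcompDl E1 E2.
have -> : forall a b c d : T1 -> T1 -> F, addm (addm a b) (addm c d) = addm (addm a c) (addm b d).
  move=> a b c d; rewrite -!addmA; congr addm; rewrite !addmA; congr addm; exact: addmC.
rewrite -H1 -mcompDr -mcompDl -H2 mcompDl mcomp1l mcompDr.
rewrite -!mcompA.
have K : forall a b c : T1 -> T1 -> F, addm (addm a c) (addm b a) = addm b c.
  move=> a b c; apply: functional_extensionality => z; apply: functional_extensionality => x.
  by rewrite /addm [b z x + _]addrC addrACA F2_addxx add0r addrC.
by rewrite K.
Qed.

Lemma hequiv_trans C D E : hequiv C D -> hequiv D E -> hequiv C E.
Proof.
case=> f1 [g1 [h1 [k1 [[a1 a2 a3 a4] [a5 a6 a7 a8]]]]].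
case=> f2 [g2 [h2 [k2 [[b1 b2 b3 b4] [b5 b6 b7 b8]]]]].
exists (mcomp f2 f1), (mcomp g1 g2), (addm h1 (mcomp g1 (mcomp h2 f1))),
       (addm k2 (mcomp f2 (mcomp k1 g2))).
split; split.
- by have := filt_comp b1 a1.
- by have := filt_comp a2 b2.
- by rewrite -mcompA a3 !mcompA b3.
- by rewrite -mcompA b4 !mcompA a4.
- apply: filt_add => //; have := filt_comp a2 (filt_comp b5 a1).
  by rewrite add0r addr0.
- apply: filt_add => //; have := filt_comp b1 (filt_comp a6 b2).
  by rewrite add0r addr0.
- exact: (htpy_alg a4 a3 a7 b7).
- exact: (htpy_alg b3 b4 b8 a8).
Qed.

Arguments zm {T1 T2}.
Arguments id1 {T}.
Arguments filt : clear implicits.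

Arguments filt_zm : clear implicits.
Arguments filt_id1 : clear implicits.
Ltac fext := apply: functional_extensionality => z0; apply: functional_extensionality => x0.

Lemma hequiv_iso C D (f : gen D -> gen C -> F) (g : gen C -> gen D -> F) :
  filt C D 0 f -> filt D C 0 g -> mcomp f (dif C) = mcomp (dif D) f ->
  mcomp g f = id1 -> mcomp f g = id1 -> hequiv C D.
Proof.
move=> ff fg ch gf fg1; exists f, g, zm, zm; split; split => //.
- by rewrite -[LHS]mcomp1r -fg1 !mcompA -[mcomp (mcomp g _) f]mcompA -ch
     !mcompA gf mcomp1l.
- by rewrite gf mcomp0r mcomp0l addmm addm0.
- by rewrite fg1 mcomp0r mcomp0l addmm addm0.
Qed.

Definition pm (T1 T2 : finType) (p : T1 -> T2) : T2 -> T1 -> F :=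
  fun y x => (y == p x)%:R.

Lemma mcomp_pmr (T1 T2 T3 : finType) (f : T3 -> T2 -> F) (p : T1 -> T2) :
  mcomp f (pm p) = fun z x => f z (p x).
Proof.
fext; rewrite /mcomp /pm (bigD1 (p x0)) //= eqxx mulr1 big1 ?addr0 //.
by move=> y /negbTE ->; rewrite mulr0.
Qed.

Lemma mcomp_pml (T1 T2 T3 : finType) (f : T2 -> T1 -> F) (p : T2 -> T3)
  (q : T3 -> T2) : cancel p q -> cancel q p ->
  mcomp (pm p) f = fun z x => f (q z) x.
Proof.
move=> pq qp; fext; rewrite /mcomp /pm (bigD1 (q z0)) //= qp eqxx mul1r big1 ?addr0 //.
move=> y yq; case: eqP; rewrite ?mul0r // => E.
by move: yq; rewrite E pq eqxx.
Qed.

Lemma hequiv_relabel C D (p : gen C -> gen D) (q : gen D -> gen C) :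
  cancel p q -> cancel q p -> (forall x, gr (p x) = gr x) ->
  (forall x, alex (p x) = alex x) ->
  (forall y x, dif D (p y) (p x) = dif C y x) -> hequiv C D.
Proof.
move=> pq qp hg ha hd.
apply: (@hequiv_iso C D (pm p) (pm q)).
- move=> y x; rewrite /pm; case: (y =P p x) => [->|]; rewrite ?eqxx // => _.
  by exists 0; rewrite hg ha; split; lia.
- move=> y x; rewrite /pm; case: (y =P q x) => [->|]; rewrite ?eqxx // => _.
  have h1 := hg (q x); have h2 := ha (q x); rewrite qp in h1 h2.
  by exists 0; split; rewrite ?subr0; [rewrite h1 subrr mul0r|done|rewrite h2]...
- rewrite mcomp_pmr (mcomp_pml _ pq qp); fext.
  by rewrite -hd qp.
- rewrite mcomp_pmr; fext; rewrite /pm pq; done.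
- rewrite mcomp_pmr; fext; rewrite /pm /id1 qp; done.
Qed.

Lemma dif_tens C D : dif (tens C D) = addm (kron (dif C) id1) (kron id1 (dif D)).
Proof. by []. Qed.
Lemma dif_dsum C D : dif (dsum C D) = dmat (dif C) (dif D).
Proof. by []. Qed.
Lemma dif_dual C : dif (dual C) = tr (dif C).
Proof. by []. Qed.

Lemma addm_swap (T1 T2 : finType) (a b c d : T2 -> T1 -> F) :
  addm (addm a b) (addm c d) = addm (addm a c) (addm b d).
Proof. by fext; rewrite /addm addrACA. Qed.

Lemma hequiv_tensl C C' D : hequiv C C' -> hequiv (tens C D) (tens C' D).
Proof.
case=> f [g [h [k [[a1 a2 a3 a4] [a5 a6 a7 a8]]]]].
exists (kron f id1), (kron g id1), (kron h id1), (kron k id1).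
split; split.
- exact: filt_kronl.
- exact: filt_kronl.
- by rewrite !dif_tens mcompDr mcompDl !kron_comp !mcomp1l !mcomp1r a3.
- by rewrite !dif_tens mcompDr mcompDl !kron_comp !mcomp1l !mcomp1r a4.
- exact: filt_kronl.
- exact: filt_kronl.
- rewrite !dif_tens mcompDr mcompDl !kron_comp !mcomp1l !mcomp1r -kron11 -kron_addl a7.
  by rewrite kron_addl addm_swap addmm addm0.
- rewrite !dif_tens mcompDr mcompDl !kron_comp !mcomp1l !mcomp1r -kron11 -kron_addl a8.
  by rewrite kron_addl addm_swap addmm addm0.
Qed.

Lemma hequiv_dsuml C C' A : hequiv C C' -> hequiv (dsum C A) (dsum C' A).
Proof.
case=> f [g [h [k [[a1 a2 a3 a4] [a5 a6 a7 a8]]]]].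
exists (dmat f id1), (dmat g id1), (dmat h zm), (dmat k zm).
split; split.
- exact: filt_dmat (filt_id1 _).
- exact: filt_dmat (filt_id1 _).
- by rewrite !dif_dsum !dmat_comp !mcomp1l !mcomp1r a3.
- by rewrite !dif_dsum !dmat_comp !mcomp1l !mcomp1r a4.
- exact: filt_dmat (filt_zm _ _ _).
- exact: filt_dmat (filt_zm _ _ _).
- by rewrite !dif_dsum !dmat_comp -dmat11 dmat_add !dmat_add mcomp1l a7 !mcomp0l !mcomp0r addmm addm0.
- by rewrite !dif_dsum !dmat_comp -dmat11 dmat_add !dmat_add mcomp1l a8 !mcomp0l !mcomp0r addmm addm0.
Qed.

Lemma hequiv_dual C D : hequiv C D -> hequiv (dual C) (dual D).
Proof.
case=> f [g [h [k [[a1 a2 a3 a4] [a5 a6 a7 a8]]]]].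
exists (tr g), (tr f), (tr h), (tr k).
split; split.
- exact: filt_tr.
- exact: filt_tr.
- by rewrite !dif_dual -(tr_comp (dif C) g) -(tr_comp g (dif D)) a4.
- by rewrite !dif_dual -(tr_comp (dif D) f) -(tr_comp f (dif C)) a3.
- exact: filt_tr.
- exact: filt_tr.
- by rewrite !dif_dual -(tr_comp g f) -(tr_comp h (dif C)) -(tr_comp (dif C) h) -tr_id1 -tr_add a7 tr_add addmC.
- by rewrite !dif_dual -(tr_comp f g) -(tr_comp k (dif D)) -(tr_comp (dif D) k) -tr_id1 -tr_add a8 tr_add addmC.
Qed.

Definition contr (C : fcomplex) : Prop :=
  exists h : gen C -> gen C -> F, addm (mcomp (dif C) h) (mcomp h (dif C)) = id1.

Lemma contr_acyclic C : contr C -> acyclic C.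
Proof.
case=> h hE v dv.
pose V : gen C -> unit -> F := fun y _ => v y.
have dV : mcomp (dif C) V = zm.
  by fext; rewrite /mcomp /V dv.
exists (fun x => mcomp h V x tt) => z.
have E : V = mcomp (dif C) (mcomp h V).
  by rewrite -{1}[V]mcomp1l -hE mcompDl -!mcompA dV mcomp0r addm0.
exact: (congr1 (fun M => M z tt) E).
Qed.

Lemma contr_tensl C D : contr C -> contr (tens C D).
Proof.
case=> h hE; exists (kron h id1).
rewrite dif_tens mcompDr mcompDl !kron_comp !mcomp1l !mcomp1r.
by rewrite addm_swap addmm addm0 -kron_addl hE kron11.
Qed.

Lemma contr_tensr C D : contr D -> contr (tens C D).
Proof.
case=> h hE; exists (kron id1 h).
rewrite dif_tens mcompDr mcompDl !kron_comp !mcomp1l !mcomp1r.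
by rewrite addm_swap addmm add0m -kron_addr hE kron11.
Qed.

Lemma contr_dsum C D : contr C -> contr D -> contr (dsum C D).
Proof.
case=> h hE [k kE]; exists (dmat h k).
by rewrite dif_dsum !dmat_comp dmat_add hE kE dmat11.
Qed.

Lemma contr_dual C : contr C -> contr (dual C).
Proof.
case=> h hE; exists (tr h).
by rewrite dif_dual -(tr_comp h (dif C)) -(tr_comp (dif C) h) addmC -tr_add hE tr_id1.
Qed.

Lemma cfkP C : filt C C (-1) (dif C) -> mcomp (dif C) (dif C) = zm -> is_cfk C.
Proof.
move=> H1 H2; split; first by apply/filtP.
by move=> z x; rewrite compE H2.
Qed.

Definition cfk C := filt C C (-1) (dif C) /\ mcomp (dif C) (dif C) = zm.

Lemma cfkE C : is_cfk C -> cfk C.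
Proof.
case=> /filtP H1 H2; split => //; fext; rewrite -compE; exact: H2.
Qed.

Lemma cfk_tens C D : cfk C -> cfk D -> cfk (tens C D).
Proof.
case=> f1 e1 [f2 e2]; split.
- by apply: filt_add; [apply: filt_kronl|apply: filt_kronr].
- rewrite dif_tens mcompDr !mcompDl !kron_comp !mcomp1l !mcomp1r e1 e2 kron0l kron0r.
  by rewrite add0m addm0 addmm.
Qed.

Lemma cfk_dsum C D : cfk C -> cfk D -> cfk (dsum C D).
Proof.
case=> f1 e1 [f2 e2]; split.
- exact: filt_dmat.
- by rewrite dif_dsum dmat_comp e1 e2 dmat00.
Qed.

Lemma cfk_dual C : cfk C -> cfk (dual C).
Proof.
case=> f1 e1; split.
- exact: filt_tr.
- by rewrite dif_dual -(tr_comp (dif C) (dif C)) e1.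
Qed.

Arguments zm {T1 T2}.
Arguments id1 {T}.
Arguments filt : clear implicits.

Definition stair (N : nat) (a : int) : fcomplex :=
  @FComplex 'I_N
    (fun s => - (nat_of_ord s)%:Z)
    (fun s => a - (nat_of_ord s)%:Z)
    (fun y x => if odd x && ((y.+1 == x :> nat) || (y == x.+1 :> nat))
                then 1 else 0).

Lemma torus2E n : torus2 n = stair (n.*2.+1) n.
Proof. by []. Qed.

Lemma cfk_stair N a : cfk (stair N a).
Proof.
split.
- move=> y x /=; case: ifP => H; last by rewrite eqxx.
  move=> _; case/andP: H => ox /orP [/eqP E|/eqP E].
  + by exists 1; split; lia.
  + by exists 0; split; lia.
- fext; rewrite /mcomp big1 // => y _ /=.
  case: ifP => H1; case: ifP => H2; rewrite ?mulr0 ?mul0r //; exfalso; lia.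
Qed.

Definition arrow : fcomplex :=
  @FComplex bool (fun u => if u then -2 else -1) (fun u => if u then -1 else 0)
    (fun y x => if y && ~~ x then 1 else 0).

Lemma cfk_arrow : cfk arrow.
Proof.
split.
- move=> [] [] //= _; exists 0; split; done.
- by fext; rewrite /mcomp !big_bool; case: z0; case: x0; rewrite /= ?mulr0 ?mul0r ?addr0.
Qed.

Lemma contr_arrow : contr arrow.
Proof.
exists (fun y x => if ~~ y && x then 1 else 0).
fext; rewrite /mcomp /addm /id1 !big_bool; case: z0; case: x0;
  rewrite /= ?mulr0 ?mul0r ?mulr1 ?addr0 ?add0r //.
Qed.

Definition Bcx (k : nat) : fcomplex := tens (stair (k.*2) k) arrow.

Lemma cfk_B k : cfk (Bcx k).
Proof. exact: cfk_tens (cfk_stair _ _) cfk_arrow. Qed.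

Lemma contr_B k : contr (Bcx k).
Proof. exact: contr_tensr contr_arrow. Qed.

Definition empty_cx : fcomplex :=
  @FComplex void (fun _ => 0) (fun _ => 0) (fun _ _ => 0).

Lemma cfk_empty : cfk empty_cx.
Proof. by split; [move=> [] | fext; case: z0]. Qed.

Lemma contr_empty : contr empty_cx.
Proof. by exists zm; fext; case: z0. Qed.

Lemma cfk_trefoil : cfk trefoil.
Proof. exact: cfk_stair. Qed.

Lemma base_pos : hequiv (CFK_nT23 1) (dsum (CFK_T2 1) empty_cx).
Proof.
apply: (@hequiv_relabel (CFK_nT23 1) (dsum (CFK_T2 1) empty_cx)
  (fun x : unit * 'I_3 => (inl x.2 : 'I_3 + void))
  (fun y : 'I_3 + void => match y with inl t => (tt, t) | inr v => match v with end end)).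
- by case=> [[] t].
- by case=> // [[]].
- by move=> x /=; rewrite add0r.
- by move=> x /=; rewrite add0r.
- by move=> [[] y] [[] x] /=; rewrite mul0r add0r mul1r.
Qed.

Lemma base_neg : hequiv (CFK_mnT23 0) (dual (CFK_nT23 0)).
Proof.
apply: (@hequiv_relabel (CFK_mnT23 0) (dual (CFK_nT23 0)) id id) => //= x; by rewrite oppr0.
Qed.

Lemma dual_tens C D : hequiv (tens (dual C) (dual D)) (dual (tens C D)).
Proof.
apply: (@hequiv_relabel (tens (dual C) (dual D)) (dual (tens C D)) id id) => //= [x|x|y x]; first by rewrite opprD.
- by rewrite opprD.
- by rewrite [y.2 == _]eq_sym [y.1 == _]eq_sym.
Qed.

Lemma dual_dsum C D : hequiv (dual (dsum C D)) (dsum (dual C) (dual D)).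
Proof.
apply: (@hequiv_relabel (dual (dsum C D)) (dsum (dual C) (dual D)) id id) => //= [[x|x]|[x|x]|[y|y] [x|x]] //.
Qed.

Lemma tens_dsum C A D : hequiv (tens (dsum C A) D) (dsum (tens C D) (tens A D)).
Proof.
apply: (@hequiv_relabel (tens (dsum C A) D) (dsum (tens C D) (tens A D))
  (fun x => match x with (inl c, t) => inl (c, t) | (inr a, t) => inr (a, t) end)
  (fun y => match y with inl (c, t) => (inl c, t) | inr (a, t) => (inr a, t) end)).
- by case=> [[c|a] t].
- by case=> [[c t]|[a t]].
- by case=> [[c|a] t].
- by case=> [[c|a] t].
- by case=> [[c|a] t] [[c'|a'] t'] //=; rewrite ?mul0r ?add0r.
Qed.

Lemma dsum_assoc S B X : hequiv (dsum (dsum S B) X) (dsum S (dsum B X)).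
Proof.
apply: (@hequiv_relabel (dsum (dsum S B) X) (dsum S (dsum B X))
  (fun x => match x with inl (inl s) => inl s | inl (inr b) => inr (inl b)
                        | inr x => inr (inr x) end)
  (fun y => match y with inl s => inl (inl s) | inr (inl b) => inl (inr b)
                        | inr (inr x) => inr x end)).
- by case=> [[s|b]|x].
- by case=> [s|[b|x]].
- by case=> [[s|b]|x].
- by case=> [[s|b]|x].
- by case=> [[s|b]|x] [[s'|b']|x'].
Qed.

Arguments zm {T1 T2}.
Arguments id1 {T}.
Arguments filt : clear implicits.

Definition vec (T : finType) (L : seq (bool * T)) : T -> F :=
  fun y => \sum_(p <- L) (p.1 && (y == p.2))%:R.

Lemma mcomp_col (T1 T2 T3 : finType) (f : T3 -> T2 -> F) (g : T2 -> T1 -> F) x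
  (L : seq (bool * T2)) :
  (forall y, g y x = vec L y) -> forall z, mcomp f g z x = \sum_(p <- L) (p.1)%:R * f z p.2.
Proof.
move=> H z; rewrite /mcomp.
under eq_bigr => y _ do rewrite H /vec big_distrr.
rewrite exchange_big; apply: eq_bigr => p _ /=.
case: p.1; last by rewrite mul0r big1 // => y _; rewrite mulr0.
rewrite mul1r (bigD1 p.2) //= eqxx mulr1 big1 ?addr0 // => y /negbTE ->.
by rewrite mulr0.
Qed.

Lemma ifR (b : bool) : (if b then 1 else 0 : F) = b%:R.
Proof. by case: b. Qed.

Lemma mulRb (b1 b2 : bool) : (b1%:R * b2%:R : F) = (b1 && b2)%:R.
Proof. by case: b1; case: b2; rewrite ?mulr1 ?mulr0. Qed.

Lemma F2_eqR (n m : nat) : odd n = odd m -> (n%:R : F) = m%:R.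
Proof. by move=> H; rewrite F2_nat H -F2_nat. Qed.

Lemma inord_spec n m : ((m <= n)%N -> nat_of_ord (@inord n m) = m) /\ (nat_of_ord (@inord n m) <= n)%N.
Proof. by split; [move=> H; exact: inordK | have := ltn_ord (@inord n m)]. Qed.

Lemma ordeqE n (a b : 'I_n) : (a == b) = (nat_of_ord a == nat_of_ord b).
Proof. by []. Qed.
Lemma ordeqT n (a b : gen (torus2 n)) : (a == b) = (nat_of_ord a == nat_of_ord b).
Proof. by []. Qed.
Lemma ordeqS n z (a b : gen (stair n z)) : (a == b) = (nat_of_ord a == nat_of_ord b).
Proof. by []. Qed.

Lemma inl_eq (A B : eqType) (a b : A) : (@inl A B a == inl b) = (a == b). Proof. by []. Qed.
Lemma inr_eq (A B : eqType) (a b : B) : (@inr A B a == inr b) = (a == b). Proof. by []. Qed.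
Lemma inlr_eq (A B : eqType) (a : A) (b : B) : (inl a == inr b) = false. Proof. by []. Qed.
Lemma inrl_eq (A B : eqType) (a : A) (b : B) : (inr b == inl a) = false. Proof. by []. Qed.
Lemma bool_eqE (a b : bool) : (a == b) = (a && b || ~~ a && ~~ b). Proof. by case: a; case: b. Qed.

Ltac gen_inord := repeat match goal with |- context [nat_of_ord (@inord ?n ?m)] =>
  first [ rewrite (@inordK n m); last by lia
        | let H := fresh "H" in case: (leqP m n) => H;
          [ rewrite (@inordK n m); last by rewrite ltnS
          | let H' := fresh "H" in have H' := ltn_ord (@inord n m); move: H';
            generalize (nat_of_ord (@inord n m)) ] ] end; intros.

Ltac ordeq := repeat match goal with |- context [?a == ?b] =>
   let x := constr:(nat_of_ord a) in rewrite -[a == b]/(nat_of_ord a == nat_of_ord b) end.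

Ltac litb e := let v := eval vm_compute in e in
  match v with true => change e with true | false => change e with false end.
Ltac lit := repeat match goal with
  | |- context [?a == ?b :> nat] => litb (a == b)
  | |- context [odd ?a] => litb (odd a)
  | |- context [(?a <= ?b)%N] => litb (a <= b)%N
  end;
  rewrite ?andbF ?andFb ?andbT ?andTb ?orbF ?orFb ?orbT ?orTb /= ?add0n ?addn0.

Ltac f2simp :=
  rewrite /vec /id1 /= ?big_cons ?big_nil /= ?ifR ?mulRb ?addr0 ?add0r -?natrD ?mulRb;
  rewrite ?mulr1 ?mulr0 ?mul1r ?mul0r ?addr0 ?add0r ?natrD ?mulrDr ?mulrDl ?mulRb ?mulr1 ?mulr0 ?mul1r ?mul0r ?addr0 ?add0r -?natrD;
  rewrite ?inl_eq ?inr_eq ?inlr_eq ?inrl_eq ?xpair_eqE ?bool_eqE; ordeq; rewrite /=; lit; rewrite ?add0n ?addn0.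

Ltac f2fin := intros; rewrite -?natrD; try change (0 : F) with ((0%N)%:R : F); apply: F2_eqR; gen_inord; lit; lia.

Ltac par v := let H := fresh "Hpar" in
  have H := odd_double_half (nat_of_ord v);
  move: H; case: (odd (nat_of_ord v)) => H; rewrite -H.

Ltac oddsimp := rewrite ?addn0 ?addn1 ?add0n ?add1n /= ?oddS ?oddD ?odd_double /=;
  rewrite ?andbF ?andFb ?andbT ?andTb ?orbF ?orFb ?orbT ?orTb ?negbK /= ?add0n ?addn0.

Ltac isplit i := repeat match goal with
  | |- context [(nat_of_ord i == ?e)] =>
    case: (eqVneq (nat_of_ord i) e); [let H := fresh "Hsp" in intro H; rewrite H | intro]
  end.

Section Crux.
Variable K : nat.

Definition Ocx := tens (torus2 K.+1) trefoil.
Definition Ncx := dsum (torus2 K.+2) (tens (stair (K.*2.+2) K.+1) arrow).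

Definition psi : gen Ocx -> gen Ncx -> F := fun o n =>
  let i := nat_of_ord o.1 in let t := nat_of_ord o.2 in
  (match n with
   | inl r' => let r := nat_of_ord r' in [|| (r <= K.+1.*2) && (i == r) && (t == 0),
                  (r == K.+1.*2.+1) && (i == K.+1.*2) && (t == 1) |
                  (r == K.+1.*2.+2) && (i == K.+1.*2) && (t == 2)]
   | inr (s', false) => let s := nat_of_ord s' in ((i == s) && (t == 1)) || (~~ odd s && (i == s.+1) && (t == 0))
   | inr (s', true) => let s := nat_of_ord s' in [|| (i == s) && (t == 2),
                  (s.+2 <= K.+1.*2) && (i == s.+2) && (t == 0) |
                  (s.+1 == K.+1.*2) && (i == K.+1.*2) && (t == 1)]
   end)%N%:R.

Definition phi : gen Ncx -> gen Ocx -> F := fun n o =>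
  let i := nat_of_ord o.1 in let t := nat_of_ord o.2 in
  (match n with
   | inl r' => let r := nat_of_ord r' in [|| (t == 0) && (r == i),
                  (i == K.+1.*2) && (t == 1) && (r == K.+1.*2.+1),
                  (i == K.+1.*2) && (t == 2) && (r == K.+1.*2.+2),
                  (i < K.+1.*2) && (t == 1) && ~~ odd i && (r == i.+1),
                  (i.+2 <= K.+1.*2) && (t == 2) && (r == i.+2) |
                  (i.+1 == K.+1.*2) && (t == 2) && (r == K.+1.*2.+1)]
   | inr (s', u) => let s := nat_of_ord s' in (i == s) && (if u then t == 2 else t == 1)
   end)%N%:R.

Local Open Scope nat_scope.
Definition oel (a b : nat) : gen Ocx := (@inord (K.+1.*2) a, @inord 2 b).
Definition nl (a : nat) : gen Ncx := inl (@inord (K.+2.*2) a).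
Definition nr (a : nat) (u : bool) : gen Ncx := inr (@inord (K.*2.+1) a, u).

Definition colPsi (n : gen Ncx) : seq (bool * gen Ocx) :=
  match n with
  | inl r' => let r := nat_of_ord r' in [:: ((r <= K.+1.*2)%N, oel r 0); ((r == K.+1.*2.+1)%N, oel K.+1.*2 1);
                 ((r == K.+1.*2.+2)%N, oel K.+1.*2 2)]
  | inr (s', false) => let s := nat_of_ord s' in [:: (true, oel s 1); (~~ odd s, oel s.+1 0)]
  | inr (s', true) => let s := nat_of_ord s' in [:: (true, oel s 2); ((s.+2 <= K.+1.*2)%N, oel s.+2 0);
                        ((s.+1 == K.+1.*2)%N, oel K.+1.*2 1)]
  end.

Lemma colPsiE n y : psi y n = vec (colPsi n) y.
Proof.
case: y => [i [[|[|[|//]]] Ht]]; have := ltn_ord i;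
case: n => [r|[s [|]]]; [have := ltn_ord r|have := ltn_ord s|have := ltn_ord s| have := ltn_ord r|have := ltn_ord s|have := ltn_ord s| have := ltn_ord r|have := ltn_ord s|have := ltn_ord s];
  rewrite /psi /colPsi /oel; f2simp; f2fin.
Qed.


Definition colPhi (o : gen Ocx) : seq (bool * gen Ncx) :=
  let i := nat_of_ord o.1 in let t := nat_of_ord o.2 in
  [:: ((t == 0)%N, nl i);
      ((i == K.+1.*2) && (t == 1), nl K.+1.*2.+1);
      ((i == K.+1.*2) && (t == 2), nl K.+1.*2.+2);
      ([&& (i < K.+1.*2)%N, (t == 1) & ~~ odd i], nl i.+1);
      ((i.+2 <= K.+1.*2)%N && (t == 2), nl i.+2);
      ((i.+1 == K.+1.*2) && (t == 2), nl K.+1.*2.+1);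
      ((i < K.+1.*2)%N && (t == 1), nr i false);
      ((i < K.+1.*2)%N && (t == 2), nr i true)].

Lemma colPhiE o y : phi y o = vec (colPhi o) y.
Proof.
case: o => [i [[|[|[|//]]] Ht]]; have := ltn_ord i;
case: y => [r|[s [|]]]; [have := ltn_ord r|have := ltn_ord s|have := ltn_ord s| have := ltn_ord r|have := ltn_ord s|have := ltn_ord s| have := ltn_ord r|have := ltn_ord s|have := ltn_ord s];
  rewrite /phi /colPhi /nl /nr; f2simp; f2fin.
Qed.

Definition colDN (n : gen Ncx) : seq (bool * gen Ncx) :=
  match n with
  | inl r' => let r := nat_of_ord r' in
      [:: (odd r, nl r.-1); (odd r && (r.+1 < K.+2.*2.+1)%N, nl r.+1)]
  | inr (s', u) => let s := nat_of_ord s' in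
      [:: (odd s, nr s.-1 u); (odd s && (s.+1 < K.+1.*2)%N, nr s.+1 u); (~~ u, nr s true)]
  end.

Lemma colDNE n y : dif Ncx y n = vec (colDN n) y.
Proof.
case: n => [r|[s [|]]]; [have := ltn_ord r|have := ltn_ord s|have := ltn_ord s];
case: y => [r'|[s' [|]]]; [have := ltn_ord r'|have := ltn_ord s'|have := ltn_ord s'| have := ltn_ord r'|have := ltn_ord s'|have := ltn_ord s'| have := ltn_ord r'|have := ltn_ord s'|have := ltn_ord s'];
  rewrite /colDN /nl /nr; f2simp; f2fin.
Qed.

Definition colDO (o : gen Ocx) : seq (bool * gen Ocx) :=
  let i := nat_of_ord o.1 in let t := nat_of_ord o.2 in
  [:: (odd i, oel i.-1 t); (odd i && (i.+1 < K.+1.*2.+1)%N, oel i.+1 t);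
      (odd t, oel i t.-1); (odd t && (t.+1 < 3)%N, oel i t.+1)].

Lemma colDOE o y : dif Ocx y o = vec (colDO o) y.
Proof.
case: o => [i [[|[|[|//]]] Ht]]; have := ltn_ord i;
case: y => [i' [[|[|[|//]]] Ht']]; have := ltn_ord i';
  rewrite /colDO /oel; f2simp; f2fin.
Qed.


Lemma R_neq0 (b : bool) : (b%:R : F) != 0%R -> b.
Proof. by case: b; rewrite ?eqxx. Qed.

Lemma psi_filt : filt Ncx Ocx 0%R psi.
Proof.
move=> [i [[|[|[|//]]] Ht]] [r|[s [|]]] /R_neq0 H; exists 0%R; move: H;
  rewrite /= ?ordeqE; move: (ltn_ord i); intros; split; lia.
Qed.

Lemma phi_filt : filt Ocx Ncx 0%R phi.
Proof.
move=> [r|[s [|]]] [i [[|[|[|//]]] Ht]] /R_neq0 H; exists 0%R; move: H;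
  rewrite /= ?ordeqE; move: (ltn_ord i); intros; split; lia.
Qed.

Lemma phipsi : mcomp phi psi = id1.
Proof.
fext; rewrite (mcomp_col _ (colPsiE x0)).
case: x0 => [r|[s [|]]]; [have := ltn_ord r|have := ltn_ord s|have := ltn_ord s];
case: z0 => [r'|[s' [|]]]; [have := ltn_ord r'|have := ltn_ord s'|have := ltn_ord s'| have := ltn_ord r'|have := ltn_ord s'|have := ltn_ord s'| have := ltn_ord r'|have := ltn_ord s'|have := ltn_ord s'];
  rewrite /colPsi /oel /phi; f2simp; f2fin.
Qed.

Lemma psiphi : mcomp psi phi = id1.
Proof.
fext; rewrite (mcomp_col _ (colPhiE x0)).
case: x0 => [i [[|[|[|//]]] Ht]]; have := ltn_ord i;
case: z0 => [i' [[|[|[|//]]] Ht']]; have := ltn_ord i';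
  rewrite /colPhi /nl /nr /psi; f2simp; f2fin.
Qed.

Lemma psi_chain : mcomp psi (dif Ncx) = mcomp (dif Ocx) psi.
Proof.
fext; rewrite (mcomp_col _ (colDNE x0)) (mcomp_col _ (colPsiE x0)).
case: x0 => [v|[v [|]]]; have := ltn_ord v;
case: z0 => [i [[|[|[|//]]] Ht]]; have := ltn_ord i;
  rewrite /colDN /colPsi /nl /nr /oel /psi; f2simp; intros; rewrite -?natrD; try change (0%R : F) with ((0%N)%:R : F);
  apply: F2_eqR; gen_inord; lit; isplit i; lit; case: (boolP (odd (nat_of_ord v))) => ?; lit; rewrite ?negbK; lia.
Qed.

End Crux.

Lemma crux K : hequiv (Ocx K) (Ncx K).
Proof.
apply: hequiv_sym.
exact: (@hequiv_iso (Ncx K) (Ocx K) (@psi K) (@phi K) (@psi_filt K) (@phi_filt K)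
  (psi_chain K) (phipsi K) (psiphi K)).
Qed.



Lemma pos_main n : exists A, [/\ cfk A, contr A &
  hequiv (CFK_nT23 n.+1) (dsum (CFK_T2 n.+1) A)].
Proof.
elim: n => [|n [A [cA hA eA]]].
  by exists empty_cx; split; [exact: cfk_empty|exact: contr_empty|exact: base_pos].
exists (dsum (tens (stair (n.*2.+2) n.+1) arrow) (tens A trefoil)); split.
- exact: cfk_dsum (cfk_tens (cfk_stair _ _) cfk_arrow) (cfk_tens cA cfk_trefoil).
- exact: contr_dsum (contr_tensr _ contr_arrow) (contr_tensl _ hA).
- have h1 : hequiv (CFK_nT23 n.+2) (tens (dsum (CFK_T2 n.+1) A) trefoil).
    exact: hequiv_tensl eA.
  have h2 := tens_dsum (CFK_T2 n.+1) A trefoil.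
  have h3 : hequiv (dsum (tens (CFK_T2 n.+1) trefoil) (tens A trefoil))
                   (dsum (Ncx n) (tens A trefoil)).
    exact: hequiv_dsuml (crux n).
  have h4 := dsum_assoc (torus2 n.+2) (tens (stair (n.*2.+2) n.+1) arrow) (tens A trefoil).
  exact: hequiv_trans (hequiv_trans (hequiv_trans h1 h2) h3) h4.
Qed.

Lemma neg_tpow n : hequiv (CFK_mnT23 n) (dual (CFK_nT23 n)).
Proof.
elim: n => [|n IH]; first exact: base_neg.
have h1 : hequiv (CFK_mnT23 n.+1) (tens (dual (CFK_nT23 n)) (dual trefoil)).
  exact: hequiv_tensl IH.
exact: hequiv_trans h1 (dual_tens _ _).
Qed.

Lemma neg_main n : exists A, [/\ cfk A, contr A &
  hequiv (CFK_mnT23 n.+1) (dsum (CFK_mT2 n.+1) A)].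
Proof.
have [A [cA hA eA]] := pos_main n.
exists (dual A); split.
- exact: cfk_dual.
- exact: contr_dual.
- exact: hequiv_trans (hequiv_trans (neg_tpow n.+1) (hequiv_dual eA)) (dual_dsum _ _).
Qed.

Theorem lemma7p2 (n : nat) (hn : (0 < n)%N) :
  (exists A : fcomplex, [/\ is_cfk A, acyclic A &
     filt_htpy_equiv (CFK_nT23 n) (dsum (CFK_T2 n) A)]) /\
  (exists A : fcomplex, [/\ is_cfk A, acyclic A &
     filt_htpy_equiv (CFK_mnT23 n) (dsum (CFK_mT2 n) A)]).
Proof.
case: n hn => // n _; split.
- have [A [[c1 c2] hA eA]] := pos_main n.
  exists A; split; [exact: cfkP | exact: contr_acyclic | exact: hequivP].
- have [A [[c1 c2] hA eA]] := neg_main n.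
  exists A; split; [exact: cfkP | exact: contr_acyclic | exact: hequivP].
Qed.
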